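(* Let $\Sigma$, $\mathcal S=\mathcal S^+\cup\mathcal S^-$, $\mathsf{ce}$, $\mathsf{Act}$, $\mathsf{Enc}$, $\Sigma_{\mathsf{Act}}$, $\widehat\Sigma$, $\widehat{\mathcal S}=\widehat{\mathcal S}^+\cup\widehat{\mathcal S}^-$ and $\widehat D$ be as in the context. For any two words $w_1,w_2\in\mathrm{pref}(\mathcal S)$, if the runs of $\widehat D$ on $\mathsf{Enc}(w_1)$ and on $\mathsf{Enc}(w_2)$ both exist and reach the same state, then $\mathsf{Act}(w_1)\sim\mathsf{Act}(w_2)$.
   Context: Let $\Sigma=\{\sigma_1,\dots,\sigma_k\}$ be a finite alphabet. A sample set is a pair of finite sets of words $\mathcal S^+,\mathcal S^-\subseteq\Sigma^*$ with $\mathcal S^+\cap\mathcal S^-=\emptyset$; write $\mathcal S=\mathcal S^+\cup\mathcal S^-$ and $\mathrm{pref}(\mathcal S)$ for the set of all prefixes (including $\varepsilon$ and the words themselves) of words of $\mathcal S$. We are given $\mathsf{ce}:\mathrm{pref}(\mathcal S)\to\mathbb N$ with $\mathsf{ce}(\varepsilon)=0$ and $\mathsf{ce}(w\sigma)-\mathsf{ce}(w)\in\{-1,0,+1\}$ whenever $w\sigma\in\mathrm{pref}(\mathcal S)$, $\sigma\in\Sigma$. For $d\in\mathbb N$, $\mathrm{sgn}(d)=0$ if $d=0$ and $1$ otherwise. For $w\in\mathrm{pref}(\mathcal S)$ define $\mathsf{Act}(w)\in\{0,1\}\times\{0,+1,-1,\bot\}^k$ by $\mathsf{Act}(w)[0]=\mathrm{sgn}(\mathsf{ce}(w))$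 and, for $i\in[1,k]$, $\mathsf{Act}(w)[i]=\mathsf{ce}(w\sigma_i)-\mathsf{ce}(w)$ if $w\sigma_i\in\mathrm{pref}(\mathcal S)$, and $\mathsf{Act}(w)[i]=\bot$ otherwise. For a tuple $\mathit{act}$ of this shape, $\mathit{act}|_{\sigma_i}$ denotes $\mathit{act}[i]$. Two such tuples $x,y$ are similar, $x\sim y$, if either $x[0]\neq y[0]$, or for all $i\in[1,k]$: $x[i]=\bot$ or $y[i]=\bot$ or $x[i]=y[i]$; otherwise $x\not\sim y$. Let $\widetilde\Sigma=\{\sigma^0,\sigma^1:\sigma\in\Sigma\}$ (fresh letters). For $w\in\mathrm{pref}(\mathcal S)$, $\mathsf{Enc}(\varepsilon)=\varepsilon$ and $\mathsf{Enc}(w)$ is the word over $\widetilde\Sigma$ of the same length with $\mathsf{Enc}(w)[0]=w[0]^0$ and $\mathsf{Enc}(w)[i]=w[i]^{\mathrm{sgn}(\mathsf{ce}(w[0\cdots i-1]))}$ for $i>0$ (positions indexed from $0$). Let $\Sigma_{\mathsf{Act}}=\{\mathsf{Act}(w):w\in\mathrm{pref}(\mathcal S)\}$, viewed as a set of fresh letters, and $\widehat\Sigma=\widetilde\Sigma\cup\Sigma_{\mathsf{Act}}$. The enriched sample over $\widehat\Sigma$ is: $\widehat{\mathcal S}^+=\{\mathsf{Enc}(w):w\in\mathcal S^+\}\cup\{\mathsf{Enc}(w)\cdot\mathsf{Act}(w):w\in\mathrm{pref}(\mathcal S)\}$ and $\widehat{\mathcal S}^-=\{\mathsf{Enc}(w):w\in\mathcal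 S^-\}\cup\{\mathsf{Enc}(w)\cdot\mathit{op}:w\in\mathrm{pref}(\mathcal S),\ \mathit{op}\in\Sigma_{\mathsf{Act}},\ \mathit{op}\not\sim\mathsf{Act}(w)\}$. $\widehat D=(Q,\widehat\Sigma,q_0,\delta,F)$ is a deterministic finite automaton with possibly partial transition function $\delta$ (a word is accepted iff its run exists and ends in $F$) such that: (i) $\widehat D$ accepts every word of $\widehat{\mathcal S}^+$ and rejects every word of $\widehat{\mathcal S}^-$; (ii) every transition comes from a prefix of a positive sample: whenever $\delta(q,x)=q'$ with $x\in\widehat\Sigma$, there is a word $u$ with $ux\in\mathrm{pref}(\widehat{\mathcal S}^+)$ and $\delta(q_0,u)=q$. (These properties hold e.g. for the output of the RPNI algorithm, which merges states of the prefix tree acceptor of $\widehat{\mathcal S}^+$ while staying consistent with $\widehat{\mathcal S}$.) *)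

(* Defs.v *)
From mathcomp Require Import all_boot all_algebra.
Set Implicit Arguments. Unset Strict Implicit. Unset Printing Implicit Defensive.
Import GRing.Theory Num.Theory.

(* An action tuple in {0,1} x {0,+1,-1,bot}^k, with k = #|Sigma|:
   component 0 is a bool, components indexed by letters sigma : Sigma,
   None = bot, Some d = d (an integer). *)
Definition act_t (Sigma : finType) := (bool * {ffun Sigma -> option int})%type.

(* The enriched alphabet: inl (a, b) is the letter a^b (b = false <-> 0),
   inr act is the fresh action letter act. *)
Definition hletter (Sigma : finType) := ((Sigma * bool) + act_t Sigma)%type.

Definition inpref (Sigma : finType) (Sp Sm : seq (seq Sigma)) (w : seq Sigma) : bool :=
  has (prefix w) (Sp ++ Sm).

Definition sgn (d : nat) : bool := d != 0%N.

Definition Act (Sigma : finType) (Sp Sm : seq (seq Sigma)) (ce : seq Sigma -> nat)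
    (w : seq Sigma) : act_t Sigma :=
  (sgn (ce w),
   [ffun s : Sigma => if inpref Sp Sm (rcons w s)
                      then Some ((ce (rcons w s))%:Z - (ce w)%:Z)%R else None]).

Definition act_similar (Sigma : finType) (x y : act_t Sigma) : bool :=
  (x.1 != y.1) ||
  [forall i, (x.2 i == None) || (y.2 i == None) || (x.2 i == y.2 i)].

(* Enc(w)[0] = w[0]^0, Enc(w)[i] = w[i]^{sgn(ce(w[0..i-1]))} for i > 0 *)
Definition Enc (Sigma : finType) (ce : seq Sigma -> nat) (w : seq Sigma)
    : seq (hletter Sigma) :=
  [seq inl (x.2, (x.1 != 0%N) && sgn (ce (take x.1 w)))
     | x <- zip (iota 0 (size w)) w].

Definition SigmaAct (Sigma : finType) (Sp Sm : seq (seq Sigma)) (ce : seq Sigma -> nat)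
    (op : act_t Sigma) : Prop :=
  exists w, inpref Sp Sm w /\ op = Act Sp Sm ce w.

Definition hpos (Sigma : finType) (Sp Sm : seq (seq Sigma)) (ce : seq Sigma -> nat)
    (v : seq (hletter Sigma)) : Prop :=
  (exists2 w, w \in Sp & v = Enc ce w) \/
  (exists w, inpref Sp Sm w /\ v = rcons (Enc ce w) (inr (Act Sp Sm ce w))).

Definition hneg (Sigma : finType) (Sp Sm : seq (seq Sigma)) (ce : seq Sigma -> nat)
    (v : seq (hletter Sigma)) : Prop :=
  (exists2 w, w \in Sm & v = Enc ce w) \/
  (exists w op, [/\ inpref Sp Sm w, SigmaAct Sp Sm ce op,
                    ~~ act_similar op (Act Sp Sm ce w) & v = rcons (Enc ce w) (inr op)]).

Definition hpos_pref (Sigma : finType) (Sp Sm : seq (seq Sigma)) (ce : seq Sigma -> nat)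
    (u : seq (hletter Sigma)) : Prop :=
  exists v, hpos Sp Sm ce v /\ prefix u v.

Definition dfa_run (Q A : Type) (delta : Q -> A -> option Q) (q : Q) (u : seq A) : option Q :=
  foldl (fun oq a => if oq is Some q' then delta q' a else None) (Some q) u.

Definition accepts (Q A : Type) (delta : Q -> A -> option Q) (q0 : Q) (F : pred Q)
    (u : seq A) : bool :=
  if dfa_run delta q0 u is Some q then F q else false.

(* Main.v *)
Require Import Defs.
From mathcomp Require Import all_boot all_algebra.

Theorem lemma1 (Sigma : finType) (Sp Sm : seq (seq Sigma))
  (ce : seq Sigma -> nat)
  (Hdisj : forall w, w \in Sp -> w \notin Sm)
  (Hce0 : ce [::] = 0%N)
  (Hcestep : forall w s, inpref Sp Sm (rcons w s) ->
     ((ce (rcons w s))%:Z - (ce w)%:Z)%R \in [:: 0%R; 1%R; (-1)%R])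
  (Q : finType) (q0 : Q) (delta : Q -> hletter Sigma -> option Q) (F : pred Q)
  (Hpos : forall v, hpos Sp Sm ce v -> accepts delta q0 F v)
  (Hneg : forall v, hneg Sp Sm ce v -> ~~ accepts delta q0 F v)
  (Htrans : forall q x q', delta q x = Some q' ->
     exists u, hpos_pref Sp Sm ce (rcons u x) /\ dfa_run delta q0 u = Some q)
  (w1 w2 : seq Sigma) (q : Q) :
  inpref Sp Sm w1 -> inpref Sp Sm w2 ->
  dfa_run delta q0 (Enc ce w1) = Some q -> dfa_run delta q0 (Enc ce w2) = Some q ->
  act_similar (Act Sp Sm ce w1) (Act Sp Sm ce w2).
Proof.
move=> H1 H2 R1 R2; apply/negPn/negP => Hns.
have runr : forall (u : seq (hletter Sigma)) a,
  dfa_run delta q0 (rcons u a) =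
  (if dfa_run delta q0 u is Some q' then delta q' a else None).
  by move=> u a; rewrite /dfa_run foldl_rcons.
have Hp := Hpos (rcons (Enc ce w1) (inr (Act Sp Sm ce w1))).
have Hn := Hneg (rcons (Enc ce w2) (inr (Act Sp Sm ce w1))).
have : accepts delta q0 F (rcons (Enc ce w1) (inr (Act Sp Sm ce w1))).
  by apply: Hp; right; exists w1.
have : ~~ accepts delta q0 F (rcons (Enc ce w2) (inr (Act Sp Sm ce w1))).
  apply: Hn; right; exists w2, (Act Sp Sm ce w1); split => //.
  by exists w1.
by rewrite /accepts !runr R1 R2 => /negP.
Qed.
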